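(* Let $f_1,f_2:(0,1)\to(0,1)$ each be of the form $f_m(p)=1-\sum_{k=1}^\infty c_{m,k}(1-p)^k$ with $c_{m,k}\ge0$ and $\sum_k c_{m,k}=1$ ($m=1,2$). Define $f(p)=f_2(f_1(p))$, $g(p)=1-(1-f_1(p))(1-f_2(p))$, and $h(p)=\alpha f_1(p)+(1-\alpha)f_2(p)$ for a fixed $\alpha\in(0,1)$. Then: (a) each of $f,g,h$ can also be written as $1-\sum_{k=1}^\infty c_k(1-p)^k$ with $c_k\ge0$ and $\sum_k c_k=1$; (b) if $\lim_{p\to0}f_m(p)/p=\infty$ for $m=1,2$, then $\lim_{p\to0}F(p)/p=\infty$ for each $F\in\{f,g,h\}$; (c) if $f_m'(p)=\Omega(f_m(p)/p)$ as $p\to0$ for $m=1,2$, then $F'(p)=\Omega(F(p)/p)$ as $p\to0$ for each $F\in\{f,g,h\}$.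
   Context: For positive $f_1,f_2$, $f_1(x)=\Omega(f_2(x))$ as $x\to x_0$ means there are $C,\delta>0$ with $f_1(x)\ge Cf_2(x)$ for all $x$ in the domain with $|x-x_0|<\delta$. *)

(* Defs.v *)
From Stdlib Require Import Reals.
Open Scope R_scope.

(* F(p) = 1 - sum_{k>=1} c_k (1-p)^k on (0,1), with c_k >= 0, sum_k c_k = 1.
   The sequence c is shifted: c j stands for c_{j+1}. *)
Definition series_form (F : R -> R) : Prop :=
  exists c : nat -> R,
    (forall k, 0 <= c k) /\ infinite_sum c 1 /\
    forall p, 0 < p < 1 -> infinite_sum (fun k => c k * (1 - p) ^ (S k)) (1 - F p).

Definition lim0_div_infty (F : R -> R) : Prop :=
  forall M : R, exists d, 0 < d /\ forall p, 0 < p < d -> p < 1 -> M < F p / p.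

Definition deriv_Omega (F : R -> R) : Prop :=
  exists C d, 0 < C /\ 0 < d /\
    forall p, 0 < p < d -> p < 1 ->
      exists l, derivable_pt_lim F p l /\ C * (F p / p) <= l.

(* Main.v *)
Require Import Defs.
From Stdlib Require Import Reals.
From Coquelicot Require Import Coquelicot.
From Stdlib Require Import Lra Lia.
Open Scope R_scope.

Lemma inf_lim a l : infinite_sum a l <-> is_lim_seq (fun n => sum_f_R0 a n) l.
Proof. rewrite is_lim_seq_Reals. unfold infinite_sum, Un_cv. tauto. Qed.

Lemma inf_ext a b l : (forall k, a k = b k) -> infinite_sum a l -> infinite_sum b l.
Proof.
  intros E H. apply inf_lim. apply inf_lim in H.
  eapply is_lim_seq_ext; [|exact H]. intros n; simpl. apply sum_eq. intros; auto.
Qed.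

Lemma inf_lin a b la lb x y : infinite_sum a la -> infinite_sum b lb ->
  infinite_sum (fun k => x * a k + y * b k) (x * la + y * lb).
Proof.
  intros Ha Hb. apply inf_lim. apply inf_lim in Ha. apply inf_lim in Hb.
  eapply is_lim_seq_ext.
  2: apply (is_lim_seq_plus' _ _ _ _ (is_lim_seq_scal_l _ x _ Ha) (is_lim_seq_scal_l _ y _ Hb)).
  intros n; simpl. rewrite sum_plus, !scal_sum. f_equal; apply sum_eq; intros; ring.
Qed.

Lemma sum_shift a n : sum_f_R0 a (S n) = a 0%nat + sum_f_R0 (fun k => a (S k)) n.
Proof.
  induction n. simpl. ring. rewrite tech5, IHn, tech5. ring.
Qed.

Lemma inf_shift a s : a 0%nat = 0 -> infinite_sum (fun k => a (S k)) s -> infinite_sum a s.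
Proof.
  intros H0 H. apply inf_lim. apply inf_lim in H. apply is_lim_seq_incr_1.
  eapply is_lim_seq_ext; [|exact H]. intros n. rewrite sum_shift, H0. ring.
Qed.

Lemma inf_unshift a s : a 0%nat = 0 -> infinite_sum a s -> infinite_sum (fun k => a (S k)) s.
Proof.
  intros H0 H. apply inf_lim. apply inf_lim in H. apply is_lim_seq_incr_1 in H.
  eapply is_lim_seq_ext; [|exact H]. intros n. cbv beta. rewrite (sum_shift a n), H0. ring.
Qed.

Lemma sum_mono f J N : (forall k, 0 <= f k) -> (J <= N)%nat -> sum_f_R0 f J <= sum_f_R0 f N.
Proof.
  intros Hf HJ. induction HJ. lra. rewrite tech5. specialize (Hf (S m)). lra.
Qed.

Lemma psum_le a l N : (forall n, 0 <= a n) -> infinite_sum a l -> sum_f_R0 a N <= l.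
Proof.
  intros Ha H. apply inf_lim in H.
  assert (E : eventually (fun n => sum_f_R0 a N <= sum_f_R0 a n)).
  { exists N. intros n Hn. apply sum_mono; auto. }
  exact (is_lim_seq_le_loc _ _ _ _ E (is_lim_seq_const _) H).
Qed.

Lemma inf_le a b la lb : (forall n, a n <= b n) -> infinite_sum a la -> infinite_sum b lb -> la <= lb.
Proof.
  intros E Ha Hb. apply inf_lim in Ha. apply inf_lim in Hb.
  assert (R := is_lim_seq_le _ _ _ _ (fun n => sum_Rle _ _ n (fun k _ => E k)) Ha Hb). exact R.
Qed.

Lemma inf_unique a l1 l2 : infinite_sum a l1 -> infinite_sum a l2 -> l1 = l2.
Proof. intros H1 H2. apply Rle_antisym; eapply inf_le; eauto; intros; lra. Qed.

Lemma lim_fsum (P : nat -> nat -> R) (r : nat -> R) J : (forall j, is_lim_seq (P j) (r j)) ->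
  is_lim_seq (fun N => sum_f_R0 (fun j => P j N) J) (sum_f_R0 r J).
Proof.
  intros H. induction J. simpl. apply H.
  simpl. apply is_lim_seq_plus'; auto.
Qed.

Lemma sum_swap (u : nat -> nat -> R) N M :
  sum_f_R0 (fun n => sum_f_R0 (fun j => u j n) M) N = sum_f_R0 (fun j => sum_f_R0 (fun n => u j n) N) M.
Proof.
  induction N. simpl. reflexivity.
  rewrite tech5, IHN, <- sum_plus. apply sum_eq. intros; rewrite tech5; reflexivity.
Qed.

Lemma sum_ext_zero f n N : (forall j, (n < j)%nat -> f j = 0) -> (n <= N)%nat -> sum_f_R0 f n = sum_f_R0 f N.
Proof.
  intros Hz HN. induction HN. reflexivity. rewrite tech5, Hz by lia. lra.
Qed.

Lemma tonelli_tri (u : nat -> nat -> R) (r : nat -> R) Sm :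
  (forall j n, 0 <= u j n) -> (forall j n, (n < j)%nat -> u j n = 0) ->
  (forall j, infinite_sum (u j) (r j)) -> infinite_sum r Sm ->
  infinite_sum (fun n => sum_f_R0 (fun j => u j n) n) Sm.
Proof.
  intros Hu Hz Hr HS.
  set (T := fun N => sum_f_R0 (fun n => sum_f_R0 (fun j => u j n) n) N).
  assert (TE : forall N, T N = sum_f_R0 (fun j => sum_f_R0 (u j) N) N).
  { intros N. unfold T. rewrite <- sum_swap. apply sum_eq. intros n Hn.
    apply sum_ext_zero; auto. }
  assert (Hr0 : forall j, 0 <= r j).
  { intros j. apply Rle_trans with (sum_f_R0 (u j) 0). simpl; auto. apply psum_le; auto. }
  assert (TS : forall N, T N <= Sm).
  { intros N. rewrite TE. apply Rle_trans with (sum_f_R0 r N).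
    apply sum_Rle. intros; apply psum_le; auto. apply psum_le; auto. }
  assert (Tg : Un_growing T).
  { intros N. unfold T. rewrite tech5. assert (0 <= sum_f_R0 (fun j => u j (S N)) (S N)).
    apply cond_pos_sum; auto. lra. }
  destruct (growing_cv T Tg) as [L HL].
  { exists Sm. intros x [i ->]. auto. }
  apply is_lim_seq_Reals in HL.
  assert (LS : L <= Sm).
  { assert (R := is_lim_seq_le _ _ _ _ TS HL (is_lim_seq_const Sm)). exact R. }
  assert (SL : Sm <= L).
  { assert (J : forall J, sum_f_R0 r J <= L).
    { intros J. assert (E : eventually (fun N => sum_f_R0 (fun j => sum_f_R0 (u j) N) J <= T N)).
      { exists J. intros N HN. rewrite TE. apply sum_mono; auto. intros; apply cond_pos_sum; auto. }
      exact (is_lim_seq_le_loc _ _ _ _ E (lim_fsum (fun j N => sum_f_R0 (u j) N) r J (fun j => proj1 (inf_lim _ _) (Hr j))) HL). }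
    apply inf_lim in HS.
    assert (R := is_lim_seq_le _ _ _ _ J HS (is_lim_seq_const L)). exact R. }
  apply inf_lim. replace Sm with L by lra. exact HL.
Qed.


Lemma prod_lemma (A B : nat -> R) q s1 s2 : (forall n, 0 <= A n) -> (forall n, 0 <= B n) -> 0 <= q ->
  infinite_sum (fun n => A n * q ^ n) s1 -> infinite_sum (fun n => B n * q ^ n) s2 ->
  infinite_sum (fun n => PS_mult A B n * q ^ n) (s1 * s2).
Proof.
  intros HA HB Hq H1 H2.
  assert (P : forall n, 0 <= q ^ n) by (intros; apply pow_le; auto).
  apply is_series_Reals in H1. apply is_series_Reals in H2.
  assert (M := is_series_mult _ _ _ _ H1 H2).
  apply is_series_Reals. eapply is_series_ext; [|apply M].
  - intros n. unfold PS_mult. rewrite Rmult_comm, scal_sum. apply sum_eq. intros k Hk.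
    replace (q ^ n) with (q ^ k * q ^ (n - k)) by (rewrite <- pow_add; f_equal; lia). ring.
  - eapply ex_series_ext; [|exists s1; exact H1]. intros n. rewrite Rabs_pos_eq; auto.
    apply Rmult_le_pos; auto.
  - eapply ex_series_ext; [|exists s2; exact H2]. intros n. rewrite Rabs_pos_eq; auto.
    apply Rmult_le_pos; auto.
Qed.

Definition Ash (c : nat -> R) (n : nat) : R := match n with 0%nat => 0 | S k => c k end.

Lemma Ash_nn c : (forall k, 0 <= c k) -> forall n, 0 <= Ash c n.
Proof. intros H [|n]; simpl; auto; lra. Qed.

Lemma Ash_series c y s : infinite_sum (fun k => c k * y ^ S k) s -> infinite_sum (fun n => Ash c n * y ^ n) s.
Proof. intros H. apply inf_shift. simpl; ring. exact H. Qed.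

Fixpoint pw (A : nat -> R) (j : nat) : nat -> R :=
  match j with 0%nat => fun n => match n with 0%nat => 1 | _ => 0 end
  | S j' => PS_mult A (pw A j') end.

Lemma pw_nn A : (forall n, 0 <= A n) -> forall j n, 0 <= pw A j n.
Proof.
  intros HA j. induction j; intros n; simpl.
  - destruct n; lra.
  - unfold PS_mult. apply cond_pos_sum. intros; apply Rmult_le_pos; auto.
Qed.

Lemma pw_zero A : A 0%nat = 0 -> forall j n, (n < j)%nat -> pw A j n = 0.
Proof.
  intros HA j. induction j; intros n Hn. lia.
  simpl. unfold PS_mult. apply sum_eq_R0. intros k Hk. destruct k.
  - rewrite HA; ring.
  - rewrite IHj by lia. ring.
Qed.

Lemma pw_series A q x : (forall n, 0 <= A n) -> 0 <= q -> infinite_sum (fun n => A n * q ^ n) x ->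
  forall j, infinite_sum (fun n => pw A j n * q ^ n) (x ^ j).
Proof.
  intros HA Hq H j. induction j.
  - simpl. apply inf_lim. eapply is_lim_seq_ext; [|apply is_lim_seq_const].
    intros n. induction n. simpl; ring. rewrite tech5, <- IHn. simpl; ring.
  - simpl. apply prod_lemma; auto. apply pw_nn; auto.
Qed.

Definition compc (A B : nat -> R) (n : nat) : R := sum_f_R0 (fun j => B j * pw A j n) n.

Lemma comp_series A B q x s : (forall n, 0 <= A n) -> (forall n, 0 <= B n) -> A 0%nat = 0 -> 0 <= q ->
  infinite_sum (fun n => A n * q ^ n) x -> infinite_sum (fun j => B j * x ^ j) s ->
  infinite_sum (fun n => compc A B n * q ^ n) s.
Proof.
  intros HA HB HA0 Hq H1 H2.
  assert (T := tonelli_tri (fun j n => B j * pw A j n * q ^ n) (fun j => B j * x ^ j) s).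
  eapply inf_ext; [|apply T].
  - intros n. unfold compc. rewrite Rmult_comm, scal_sum. apply sum_eq; intros; ring.
  - intros j n. apply Rmult_le_pos; [apply Rmult_le_pos|apply pow_le]; auto. apply pw_nn; auto.
  - intros j n Hn. rewrite pw_zero; auto; ring.
  - intros j. replace (B j * x ^ j) with (B j * x ^ j + 0 * s) by ring.
    eapply inf_ext; [|apply (inf_lin _ _ _ _ (B j) 0 (pw_series A q x HA Hq H1 j) H2)].
    intros k; simpl; ring. 
  - exact H2.
Qed.


Lemma one_series c : infinite_sum c 1 -> infinite_sum (fun n => Ash c n * 1 ^ n) 1.
Proof. intros H. apply Ash_series. eapply inf_ext; [|exact H]. intros k; rewrite pow1; ring. Qed.

Lemma series_h f1 f2 a : 0 <= a <= 1 -> series_form f1 -> series_form f2 ->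
  series_form (fun p => a * f1 p + (1 - a) * f2 p).
Proof.
  intros Ha [c1 [P1 [S1 F1]]] [c2 [P2 [S2 F2]]].
  exists (fun k => a * c1 k + (1 - a) * c2 k). split; [|split].
  - intros k. specialize (P1 k); specialize (P2 k). nra.
  - assert (T := inf_lin _ _ _ _ a (1 - a) S1 S2). replace (a * 1 + (1 - a) * 1) with 1 in T by ring. exact T.
  - intros p Hp. replace (1 - (a * f1 p + (1 - a) * f2 p)) with (a * (1 - f1 p) + (1 - a) * (1 - f2 p)) by ring.
    eapply inf_ext; [|apply (inf_lin _ _ _ _ a (1 - a) (F1 p Hp) (F2 p Hp))]. intros k; simpl; ring.
Qed.

Lemma series_g f1 f2 : series_form f1 -> series_form f2 ->
  series_form (fun p => 1 - (1 - f1 p) * (1 - f2 p)).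
Proof.
  intros [c1 [P1 [S1 F1]]] [c2 [P2 [S2 F2]]].
  set (A := Ash c1). set (B := Ash c2).
  assert (HA : forall n, 0 <= A n) by (apply Ash_nn; auto).
  assert (HB : forall n, 0 <= B n) by (apply Ash_nn; auto).
  assert (Z : PS_mult A B 0 = 0) by (unfold PS_mult, A; simpl; ring).
  exists (fun k => PS_mult A B (S k)). split; [|split].
  - intros k. unfold PS_mult. apply cond_pos_sum. intros; apply Rmult_le_pos; auto.
  - assert (T := prod_lemma A B 1 1 1 HA HB ltac:(lra) (one_series _ S1) (one_series _ S2)).
    rewrite Rmult_1_l in T. apply (inf_unshift _ _) in T; [|rewrite Z; ring].
    eapply inf_ext; [|exact T]. intros k; simpl; rewrite pow1; ring.
  - intros p Hp. replace (1 - (1 - (1 - f1 p) * (1 - f2 p))) with ((1 - f1 p) * (1 - f2 p)) by ring.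
    assert (T := prod_lemma A B (1 - p) _ _ HA HB ltac:(lra) (Ash_series _ _ _ (F1 p Hp)) (Ash_series _ _ _ (F2 p Hp))).
    apply (inf_unshift _ _) in T; [|rewrite Z; ring]. exact T.
Qed.

Lemma series_f f1 f2 : (forall p, 0 < p < 1 -> 0 < f1 p < 1) -> series_form f1 -> series_form f2 ->
  series_form (fun p => f2 (f1 p)).
Proof.
  intros Hr [c1 [P1 [S1 F1]]] [c2 [P2 [S2 F2]]].
  set (A := Ash c1). set (B := Ash c2).
  assert (HA : forall n, 0 <= A n) by (apply Ash_nn; auto).
  assert (HB : forall n, 0 <= B n) by (apply Ash_nn; auto).
  assert (A0 : A 0%nat = 0) by reflexivity.
  assert (Z : compc A B 0 = 0) by (unfold compc, B; simpl; ring).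
  exists (fun k => compc A B (S k)). split; [|split].
  - intros k. unfold compc. apply cond_pos_sum. intros; apply Rmult_le_pos; auto. apply pw_nn; auto.
  - assert (T := comp_series A B 1 1 1 HA HB A0 ltac:(lra) (one_series _ S1) (one_series _ S2)).
    apply (inf_unshift _ _) in T; [|rewrite Z; ring].
    eapply inf_ext; [|exact T]. intros k; simpl; rewrite pow1; ring.
  - intros p Hp.
    assert (T := comp_series A B (1 - p) (1 - f1 p) _ HA HB A0 ltac:(lra) (Ash_series _ _ _ (F1 p Hp))
                   (Ash_series _ _ _ (F2 (f1 p) (Hr p Hp)))).
    apply (inf_unshift _ _) in T; [|rewrite Z; ring]. exact T.
Qed.


Lemma bern n p : 0 <= p <= 1 -> 1 - INR n * p <= (1 - p) ^ n.
Proof.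
  intros Hp. induction n. simpl; lra.
  rewrite S_INR. simpl. assert (0 <= INR n) by apply pos_INR. nra.
Qed.

Lemma pow_le1 q n : 0 <= q <= 1 -> q ^ n <= 1.
Proof. intros H. rewrite <- (pow1 n). apply pow_incr. lra. Qed.

Lemma pow_anti q k N : 0 <= q <= 1 -> (k <= N)%nat -> q ^ N <= q ^ k.
Proof.
  intros Hq HN. replace N with (k + (N - k))%nat by lia. rewrite pow_add.
  assert (0 <= q ^ k) by (apply pow_le; lra). assert (q ^ (N - k) <= 1) by (apply pow_le1; auto).
  assert (0 <= q ^ (N - k)) by (apply pow_le; lra). nra.
Qed.

Lemma small F : series_form F -> forall e, 0 < e -> exists d, 0 < d /\ forall p, 0 < p < d -> p < 1 -> F p < e.
Proof.
  intros [c [P [S1 FF]]] e He.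
  destruct (S1 (e / 2) ltac:(lra)) as [N HN]. specialize (HN N (le_n _)).
  unfold Rdist in HN. apply Rabs_def2 in HN.
  assert (Sle : sum_f_R0 c N <= 1) by (apply psum_le; auto).
  assert (HI : 0 < INR (S N)) by (apply lt_0_INR; lia).
  exists (e / (2 * INR (S N))). split. apply Rdiv_lt_0_compat; lra.
  intros p Hp Hp1.
  assert (Hb : INR (S N) * p < e / 2).
  { destruct Hp as [Hp0 Hpd]. apply Rmult_lt_compat_l with (r := INR (S N)) in Hpd; auto.
    replace (INR (S N) * (e / (2 * INR (S N)))) with (e / 2) in Hpd by (field; lra). lra. }
  assert (L1 : sum_f_R0 (fun k => c k * (1 - p) ^ S k) N <= 1 - F p).
  { apply psum_le. intros; apply Rmult_le_pos; auto; apply pow_le; lra. apply FF; lra. }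
  assert (L2 : (1 - p) ^ S N * sum_f_R0 c N <= sum_f_R0 (fun k => c k * (1 - p) ^ S k) N).
  { rewrite scal_sum. apply sum_Rle. intros k Hk. apply Rmult_le_compat_l; auto.
    apply pow_anti; [lra|lia]. }
  assert (L3 := bern (S N) p ltac:(lra)).
  assert (0 <= INR (S N) * p) by (apply Rmult_le_pos; lra).
  assert (0 <= sum_f_R0 c N) by (apply cond_pos_sum; auto).
  nra.
Qed.

Lemma ge_id F : series_form F -> forall x, 0 < x < 1 -> x <= F x.
Proof.
  intros [c [P [S1 FF]]] x Hx.
  assert (T := inf_lin _ _ _ _ (1 - x) 0 S1 S1).
  assert (K : forall k, c k * (1 - x) ^ S k <= (1 - x) * c k + 0 * c k).
  { intros k. simpl. assert (0 <= (1 - x) ^ k) by (apply pow_le; lra).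
  assert ((1 - x) ^ k <= 1) by (apply pow_le1; lra). specialize (P k). assert (0 <= c k * (1 - x)) by (apply Rmult_le_pos; lra). nra. }
  assert (E := inf_le _ _ _ _ K (FF x Hx) T). lra.
Qed.


Lemma lim_f f1 f2 : (forall p, 0 < p < 1 -> 0 < f1 p < 1) -> series_form f2 ->
  lim0_div_infty f1 -> lim0_div_infty (fun p => f2 (f1 p)).
Proof.
  intros Hr S2 L1 M. destruct (L1 M) as [d [Hd H]]. exists d; split; auto.
  intros p Hp Hp1. specialize (H p Hp Hp1). assert (G := ge_id _ S2 (f1 p) (Hr p ltac:(lra))).
  apply Rlt_le_trans with (1 := H). unfold Rdiv. apply Rmult_le_compat_r; auto.
  left; apply Rinv_0_lt_compat; lra.
Qed.

Lemma lim_g f1 f2 : (forall p, 0 < p < 1 -> 0 < f1 p < 1) -> (forall p, 0 < p < 1 -> 0 < f2 p < 1) ->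
  lim0_div_infty f1 -> lim0_div_infty (fun p => 1 - (1 - f1 p) * (1 - f2 p)).
Proof.
  intros Hr1 Hr2 L1 M. destruct (L1 M) as [d [Hd H]]. exists d; split; auto.
  intros p Hp Hp1. specialize (H p Hp Hp1). specialize (Hr1 p ltac:(lra)). specialize (Hr2 p ltac:(lra)).
  apply Rlt_le_trans with (1 := H). unfold Rdiv. apply Rmult_le_compat_r; [|nra].
  left; apply Rinv_0_lt_compat; lra.
Qed.

Lemma lim_h f1 f2 a : 0 < a < 1 ->
  lim0_div_infty f1 -> lim0_div_infty f2 -> lim0_div_infty (fun p => a * f1 p + (1 - a) * f2 p).
Proof.
  intros Ha L1 L2 M. destruct (L1 M) as [d1 [Hd1 H1]]. destruct (L2 M) as [d2 [Hd2 H2]].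
  exists (Rmin d1 d2); split. apply Rmin_pos; auto.
  intros p Hp Hp1. assert (Hm1 := Rmin_l d1 d2). assert (Hm2 := Rmin_r d1 d2).
  specialize (H1 p ltac:(lra) Hp1). specialize (H2 p ltac:(lra) Hp1).
  replace ((a * f1 p + (1 - a) * f2 p) / p) with (a * (f1 p / p) + (1 - a) * (f2 p / p)) by (field; lra).
  nra.
Qed.

Lemma der_f f1 f2 : (forall p, 0 < p < 1 -> 0 < f1 p < 1) -> (forall p, 0 < p < 1 -> 0 < f2 p < 1) -> series_form f1 ->
  deriv_Omega f1 -> deriv_Omega f2 -> deriv_Omega (fun p => f2 (f1 p)).
Proof.
  intros Hr Hr2 S1 [C1 [d1 [HC1 [Hd1 D1]]]] [C2 [d2 [HC2 [Hd2 D2]]]].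
  destruct (small f1 S1 d2 Hd2) as [e [He Hs]].
  exists (C1 * C2), (Rmin d1 e). split. nra. split. apply Rmin_pos; auto.
  intros p Hp Hp1. assert (Hm1 := Rmin_l d1 e). assert (Hm2 := Rmin_r d1 e).
  destruct (D1 p ltac:(lra) Hp1) as [l1 [E1 I1]].
  assert (Hx := Hr p ltac:(lra)). assert (Hxs := Hs p ltac:(lra) Hp1).
  destruct (D2 (f1 p) ltac:(lra) ltac:(lra)) as [l2 [E2 I2]].
  exists (l2 * l1). split. exact (derivable_pt_lim_comp f1 f2 p l1 l2 E1 E2).
  assert (Hy := Hr2 (f1 p) Hx).
  replace (f2 (f1 p) / p) with ((f2 (f1 p) / f1 p) * (f1 p / p)) by (field; lra).
  assert (0 < f2 (f1 p) / f1 p) by (apply Rdiv_lt_0_compat; lra).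
  assert (0 < f1 p / p) by (apply Rdiv_lt_0_compat; lra).
  replace (C1 * C2 * (f2 (f1 p) / f1 p * (f1 p / p))) with ((C2 * (f2 (f1 p) / f1 p)) * (C1 * (f1 p / p))) by ring.
  apply Rmult_le_compat; auto; left; apply Rmult_lt_0_compat; auto.
Qed.

Lemma der_g f1 f2 : (forall p, 0 < p < 1 -> 0 < f1 p < 1) -> (forall p, 0 < p < 1 -> 0 < f2 p < 1) ->
  series_form f1 -> series_form f2 ->
  deriv_Omega f1 -> deriv_Omega f2 -> deriv_Omega (fun p => 1 - (1 - f1 p) * (1 - f2 p)).
Proof.
  intros Hr1 Hr2 S1 S2 [C1 [d1 [HC1 [Hd1 D1]]]] [C2 [d2 [HC2 [Hd2 D2]]]].
  destruct (small f1 S1 (1/2) ltac:(lra)) as [e1 [He1 Hs1]].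
  destruct (small f2 S2 (1/2) ltac:(lra)) as [e2 [He2 Hs2]].
  set (d := Rmin (Rmin d1 d2) (Rmin e1 e2)).
  assert (Hd : 0 < d) by (repeat apply Rmin_pos; auto).
  exists (Rmin C1 C2 / 2), d. split. assert (0 < Rmin C1 C2) by (apply Rmin_pos; auto). lra. split; auto.
  intros p Hp Hp1.
  assert (p < d1 /\ p < d2 /\ p < e1 /\ p < e2) as [Q1 [Q2 [Q3 Q4]]].
  { unfold d in Hp. destruct Hp as [_ Hp].
    assert (T1 := Rmin_l (Rmin d1 d2) (Rmin e1 e2)). assert (T2 := Rmin_r (Rmin d1 d2) (Rmin e1 e2)).
    assert (T3 := Rmin_l d1 d2). assert (T4 := Rmin_r d1 d2).
    assert (T5 := Rmin_l e1 e2). assert (T6 := Rmin_r e1 e2). lra. }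
  destruct (D1 p ltac:(lra) Hp1) as [l1 [E1 I1]].
  destruct (D2 p ltac:(lra) Hp1) as [l2 [E2 I2]].
  assert (Ha := derivable_pt_lim_minus _ _ p _ _ (derivable_pt_lim_const 1 p) E1).
  assert (Hb := derivable_pt_lim_minus _ _ p _ _ (derivable_pt_lim_const 1 p) E2).
  assert (Hm := derivable_pt_lim_mult _ _ p _ _ Ha Hb).
  assert (Hg := derivable_pt_lim_minus _ _ p _ _ (derivable_pt_lim_const 1 p) Hm).
  exists (0 - ((0 - l1) * (1 - f2 p) + (1 - f1 p) * (0 - l2))). split. exact Hg.
  assert (F1 := Hr1 p ltac:(lra)). assert (F2 := Hr2 p ltac:(lra)).
  assert (G1 := Hs1 p ltac:(lra) Hp1). assert (G2 := Hs2 p ltac:(lra) Hp1).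
  set (u := f1 p / p) in *. set (v := f2 p / p) in *.
  assert (U : 0 < u) by (apply Rdiv_lt_0_compat; lra).
  assert (V : 0 < v) by (apply Rdiv_lt_0_compat; lra).
  replace ((1 - (1 - f1 p) * (1 - f2 p)) / p) with (u + v - u * f2 p) by (unfold u, v; field; lra).
  set (m := Rmin C1 C2).
  assert (M1 := Rmin_l C1 C2). assert (M2 := Rmin_r C1 C2). fold m in M1, M2.
  assert (Mp : 0 < m) by (apply Rmin_pos; auto).
  assert (A1 : m * u <= l1) by nra. assert (A2 : m * v <= l2) by nra.
  assert (0 < m * u) by nra. assert (0 < m * v) by nra.
  assert (B1 : m * u * (1 - f2 p) <= l1 * (1 - f2 p)) by (apply Rmult_le_compat_r; lra).
  assert (B2 : m * v * (1 - f1 p) <= l2 * (1 - f1 p)) by (apply Rmult_le_compat_r; lra).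
  assert (B3 : 0 <= (m * u) * (1/2 - f2 p / 2)) by (apply Rmult_le_pos; lra).
  assert (B4 : 0 <= (m * v) * (1/2 - f1 p)) by (apply Rmult_le_pos; lra).
  unfold Rdiv. ring_simplify. ring_simplify in B1. ring_simplify in B2. ring_simplify in B3. ring_simplify in B4. lra.
Qed.

Lemma der_h f1 f2 a : 0 < a < 1 -> (forall p, 0 < p < 1 -> 0 < f1 p < 1) -> (forall p, 0 < p < 1 -> 0 < f2 p < 1) ->
  deriv_Omega f1 -> deriv_Omega f2 -> deriv_Omega (fun p => a * f1 p + (1 - a) * f2 p).
Proof.
  intros Ha Hr1 Hr2 [C1 [d1 [HC1 [Hd1 D1]]]] [C2 [d2 [HC2 [Hd2 D2]]]].
  exists (Rmin C1 C2), (Rmin d1 d2). split. apply Rmin_pos; auto. split. apply Rmin_pos; auto.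
  intros p Hp Hp1. assert (Hm1 := Rmin_l d1 d2). assert (Hm2 := Rmin_r d1 d2).
  destruct (D1 p ltac:(lra) Hp1) as [l1 [E1 I1]].
  destruct (D2 p ltac:(lra) Hp1) as [l2 [E2 I2]].
  assert (H := derivable_pt_lim_plus _ _ p _ _ (derivable_pt_lim_scal _ a p _ E1) (derivable_pt_lim_scal _ (1 - a) p _ E2)).
  exists (a * l1 + (1 - a) * l2). split. exact H.
  replace ((a * f1 p + (1 - a) * f2 p) / p) with (a * (f1 p / p) + (1 - a) * (f2 p / p)) by (field; lra).
  assert (F1 := Hr1 p ltac:(lra)). assert (F2 := Hr2 p ltac:(lra)).
  assert (U : 0 < f1 p / p) by (apply Rdiv_lt_0_compat; lra).
  assert (V : 0 < f2 p / p) by (apply Rdiv_lt_0_compat; lra).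
  set (u := f1 p / p) in *. set (v := f2 p / p) in *.
  assert (M1 := Rmin_l C1 C2). assert (M2 := Rmin_r C1 C2).
  set (m := Rmin C1 C2) in *.
  assert (Mp : 0 < m) by (apply Rmin_pos; auto).
  assert (A1 : m * u <= l1) by nra. assert (A2 : m * v <= l2) by nra.
  nra.
Qed.


Theorem proposition4 (f1 f2 : R -> R) (alpha : R) (Halpha : 0 < alpha < 1)
  (Hr1 : forall p, 0 < p < 1 -> 0 < f1 p < 1)
  (Hr2 : forall p, 0 < p < 1 -> 0 < f2 p < 1)
  (Hs1 : series_form f1) (Hs2 : series_form f2) :
  let f := fun p => f2 (f1 p) in
  let g := fun p => 1 - (1 - f1 p) * (1 - f2 p) in
  let h := fun p => alpha * f1 p + (1 - alpha) * f2 p in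
  (series_form f /\ series_form g /\ series_form h) /\
  (lim0_div_infty f1 -> lim0_div_infty f2 ->
     lim0_div_infty f /\ lim0_div_infty g /\ lim0_div_infty h) /\
  (deriv_Omega f1 -> deriv_Omega f2 ->
     deriv_Omega f /\ deriv_Omega g /\ deriv_Omega h).
Proof.
  intros f g h. unfold f, g, h. split; [|split].
  - split; [|split].
    + apply series_f; auto.
    + apply series_g; auto.
    + apply series_h; auto; lra.
  - intros L1 L2. split; [|split].
    + apply lim_f; auto.
    + apply lim_g; auto.
    + apply lim_h; auto.
  - intros D1 D2. split; [|split].
    + apply der_f; auto.
    + apply der_g; auto.
    + apply der_h; auto.
Qed.
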